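(* Let $D$ be an integral domain of characteristic zero, let $S$ be a finite subset of $D$, and let $n$ be a positive integer. Then there exist arbitrarily large primes $p$ for which there is a ring homomorphism $\phi:\mathbb{Z}[S]\to\mathbb{Z}/p\mathbb{Z}$ such that (i) $\phi$ is injective on $S$, and (ii) for every $n\times n$ matrix $(s_{ij})$ with all entries $s_{ij}\in S$, $\det(s_{ij})=0$ if and only if $\det(\phi(s_{ij}))=0$.
   Context: All rings are commutative with identity $1$, and ring homomorphisms send $1$ to $1$. The subring of $D$ generated by $1$ is identified with $\mathbb{Z}$, and $\mathbb{Z}[S]$ denotes the smallest subring of $D$ containing $S$. *)

(* Defs.v *)
From HB Require Import structures.
From mathcomp Require Import all_boot all_order all_algebra.
Set Implicit Arguments. Unset Strict Implicit. Unset Printing Implicit Defensive.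
Import Order.TTheory GRing.Theory Num.Theory.
Local Open Scope ring_scope.

Definition in_ZS (D : comNzRingType) (S : seq D) (x : D) : Prop :=
  forall P : {pred D}, GRing.subring_closed P -> {subset S <= P} -> x \in P.

Definition ring_hom_on_ZS (D : comNzRingType) (R : nzRingType) (S : seq D)
    (phi : D -> R) : Prop :=
  [/\ phi 1 = 1,
      (forall x y, in_ZS S x -> in_ZS S y -> phi (x + y) = phi x + phi y),
      (forall x, in_ZS S x -> phi (- x) = - phi x) &
      (forall x y, in_ZS S x -> in_ZS S y -> phi (x * y) = phi x * phi y)].

(* Main.v *)
Require Import Defs.
From HB Require Import structures.
From mathcomp Require Import all_boot all_order all_algebra all_field.
From Stdlib Require Import ClassicalEpsilon.
Set Implicit Arguments. Unset Strict Implicit. Unset Printing Implicit Defensive.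
Import Order.TTheory GRing.Theory Num.Theory.
Local Open Scope ring_scope.


Definition pb (P : Prop) : bool :=
  if excluded_middle_informative P then true else false.
Lemma pbP (P : Prop) : reflect P (pb P).
Proof. by rewrite /pb; case: excluded_middle_informative => h; constructor. Qed.

Section Sub.
Variable R : comNzRingType.
Implicit Types K : R -> Prop.

Definition subr K :=
  [/\ K 1, forall x y, K x -> K y -> K (x - y) & forall x y, K x -> K y -> K (x * y)].

Variable K : R -> Prop.
Hypothesis sK : subr K.

Lemma sr1 : K 1. Proof. by case: sK. Qed.
Lemma srB x y : K x -> K y -> K (x - y). Proof. by case: sK => _ h _; apply: h. Qed.
Lemma srM x y : K x -> K y -> K (x * y). Proof. by case: sK => _ _ h; apply: h. Qed.
Lemma sr0 : K 0. Proof. by rewrite -(subrr 1); apply: srB; apply: sr1. Qed.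
Lemma srN x : K x -> K (- x). Proof. by move=> kx; rewrite -sub0r; apply: srB => //; apply: sr0. Qed.
Lemma srD x y : K x -> K y -> K (x + y).
Proof. by move=> kx ky; rewrite -[y]opprK; apply: srB => //; apply: srN. Qed.
Lemma sr_nat n : K n%:R.
Proof. elim: n => [|n IH]; first exact: sr0. by rewrite mulrS; apply: srD => //; apply: sr1. Qed.
Lemma sr_int (z : int) : K z%:~R.
Proof. by case: z => n; rewrite ?NegzE ?mulrNz; [apply: sr_nat | apply: srN; apply: sr_nat]. Qed.
Lemma srX x n : K x -> K (x ^+ n).
Proof. move=> kx; elim: n => [|n IH]; first exact: sr1. by rewrite exprS; apply: srM. Qed.
Lemma sr_sum I r (P : pred I) F : (forall i, P i -> K (F i)) -> K (\sum_(i <- r | P i) F i).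
Proof. by move=> h; apply: big_ind => //; [apply: sr0 | apply: srD]. Qed.
Lemma sr_prod I r (P : pred I) F : (forall i, P i -> K (F i)) -> K (\prod_(i <- r | P i) F i).
Proof. by move=> h; apply: big_ind => //; [apply: sr1 | apply: srM]. Qed.
Lemma sr_sign (b : bool) : K ((-1) ^+ b).
Proof. by apply: srX; apply: srN; apply: sr1. Qed.

Definition polyK (p : {poly R}) := forall i, K p`_i.
Lemma polyK0 : polyK 0. Proof. by move=> i; rewrite coef0; apply: sr0. Qed.
Lemma polyKC c : K c -> polyK c%:P.
Proof. by move=> kc i; rewrite coefC; case: (i == 0)%N => //; apply: sr0. Qed.
Lemma polyK1 : polyK 1. Proof. by apply: polyKC; apply: sr1. Qed.
Lemma polyKX : polyK 'X.
Proof. by move=> i; rewrite coefX; case: (i == 1)%N; [apply: sr1 | apply: sr0]. Qed.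
Lemma polyKB p q : polyK p -> polyK q -> polyK (p - q).
Proof. by move=> hp hq i; rewrite coefB; apply: srB. Qed.
Lemma polyKN p : polyK p -> polyK (- p).
Proof. by move=> hp i; rewrite coefN; apply: srN. Qed.
Lemma polyKD p q : polyK p -> polyK q -> polyK (p + q).
Proof. by move=> hp hq i; rewrite coefD; apply: srD. Qed.
Lemma polyKM p q : polyK p -> polyK q -> polyK (p * q).
Proof. by move=> hp hq i; rewrite coefM; apply: sr_sum => j _; apply: srM. Qed.
Lemma polyKZ c p : K c -> polyK p -> polyK (c *: p).
Proof. by move=> kc hp i; rewrite coefZ; apply: srM. Qed.
Lemma polyKXn n : polyK 'X^n.
Proof. by move=> i; rewrite coefXn; case: (i == n)%N; [apply: sr1 | apply: sr0]. Qed.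
Lemma polyK_horner p x : polyK p -> K x -> K p.[x].
Proof. by move=> hp kx; rewrite horner_coef; apply: sr_sum => i _; apply: srM => //; apply: srX. Qed.
Lemma polyK_lead p : polyK p -> K (lead_coef p). Proof. by move=> hp; apply: hp. Qed.

End Sub.

Section Hom.
Variables (R : comNzRingType) (S : comNzRingType) (K : R -> Prop) (f : R -> S).
Hypothesis sK : subr K.

Definition homOn :=
  [/\ f 1 = 1, forall x y, K x -> K y -> f (x + y) = f x + f y
   & forall x y, K x -> K y -> f (x * y) = f x * f y].

Hypothesis hf : homOn.

Lemma hom1 : f 1 = 1. Proof. by case: hf. Qed.
Lemma homD x y : K x -> K y -> f (x + y) = f x + f y. Proof. by case: hf => _ h _; apply: h. Qed.
Lemma homM x y : K x -> K y -> f (x * y) = f x * f y. Proof. by case: hf => _ _ h; apply: h. Qed.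
Lemma hom0 : f 0 = 0.
Proof.
have k0 := sr0 sK.
have h := homD k0 k0; rewrite addr0 in h.
by apply: (addrI (f 0)); rewrite -h addr0.
Qed.
Lemma homN x : K x -> f (- x) = - f x.
Proof.
move=> kx; have := homD (srN sK kx) kx; rewrite addNr hom0 => /eqP.
by rewrite eq_sym addr_eq0 => /eqP.
Qed.
Lemma homB x y : K x -> K y -> f (x - y) = f x - f y.
Proof. by move=> kx ky; rewrite homD ?homN //; apply: srN. Qed.
Lemma hom_nat n : f n%:R = n%:R.
Proof. elim: n => [|n IH]; first exact: hom0. by rewrite mulrS homD ?IH ?hom1 -?mulrS //; [apply: sr1 | apply: sr_nat]. Qed.
Lemma hom_sign (b : bool) : f ((-1) ^+ b) = (-1) ^+ b.
Proof. by case: b; rewrite ?expr1 ?expr0 ?hom1 // homN ?hom1 //; apply: sr1. Qed.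
Lemma hom_sum I r (P : pred I) F : (forall i, P i -> K (F i)) ->
  f (\sum_(i <- r | P i) F i) = \sum_(i <- r | P i) f (F i).
Proof.
move=> h.
suff [] : K (\sum_(i <- r | P i) F i) /\ f (\sum_(i <- r | P i) F i) = \sum_(i <- r | P i) f (F i) by [].
apply: (big_ind2 (fun x y => K x /\ f x = y)).
- by split; [apply: sr0 | apply: hom0].
- by move=> x1 x2 y1 y2 [k1 e1] [k2 e2]; split; [apply: srD | rewrite homD // e1 e2].
- by move=> i Pi; split => //; apply: h.
Qed.
Lemma hom_prod I r (P : pred I) F : (forall i, P i -> K (F i)) ->
  f (\prod_(i <- r | P i) F i) = \prod_(i <- r | P i) f (F i).
Proof.
move=> h.
suff [] : K (\prod_(i <- r | P i) F i) /\ f (\prod_(i <- r | P i) F i) = \prod_(i <- r | P i) f (F i) by [].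
apply: (big_ind2 (fun x y => K x /\ f x = y)).
- by split; [apply: sr1 | apply: hom1].
- by move=> x1 x2 y1 y2 [k1 e1] [k2 e2]; split; [apply: srM | rewrite homM // e1 e2].
- by move=> i Pi; split => //; apply: h.
Qed.
Lemma homX x n : K x -> f (x ^+ n) = f x ^+ n.
Proof. move=> kx; elim: n => [|n IH]; first by rewrite !expr0 hom1. by rewrite !exprS homM ?IH //; apply: srX. Qed.

Lemma hom_det n (M : 'M[R]_n) : (forall i j, K (M i j)) -> f (\det M) = \det (map_mx f M).
Proof.
move=> hM; rewrite /determinant hom_sum; last first.
  by move=> s _; apply: (srM sK); [apply: (sr_sign sK) | apply: (sr_prod sK)].
apply: eq_bigr => s _; rewrite homM ?hom_sign ?hom_prod //; last 2 first.
- exact: (sr_sign sK).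
- by apply: (sr_prod sK).
by congr (_ * _); apply: eq_bigr => i _; rewrite mxE.
Qed.

Notation mp := (map_poly f).
Lemma coef_mp p i : (mp p)`_i = f p`_i.
Proof. by rewrite coef_map_id0 // hom0. Qed.
Lemma mpD p q : polyK K p -> polyK K q -> mp (p + q) = mp p + mp q.
Proof. by move=> hp hq; apply/polyP => i; rewrite coefD !coef_mp coefD homD. Qed.
Lemma mpB p q : polyK K p -> polyK K q -> mp (p - q) = mp p - mp q.
Proof. by move=> hp hq; apply/polyP => i; rewrite coefB !coef_mp coefB homB. Qed.
Lemma mpM p q : polyK K p -> polyK K q -> mp (p * q) = mp p * mp q.
Proof.
move=> hp hq; apply/polyP => i; rewrite coefM coef_mp coefM hom_sum; last first.
  by move=> j _; apply: srM.
by apply: eq_bigr => j _; rewrite homM // !coef_mp.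
Qed.
Lemma mpC c : mp c%:P = (f c)%:P.
Proof. by apply/polyP => i; rewrite coef_mp !coefC; case: (i == 0)%N; rewrite ?hom0. Qed.
Lemma mpZ c p : K c -> polyK K p -> mp (c *: p) = f c *: mp p.
Proof. by move=> kc hp; apply/polyP => i; rewrite coefZ !coef_mp coefZ homM. Qed.
Lemma mp1 : mp 1 = 1. Proof. by rewrite mpC hom1. Qed.
Lemma mpX : mp 'X = 'X.
Proof. by apply/polyP => i; rewrite coef_mp !coefX; case: (i == 1)%N; rewrite ?hom0 ?hom1. Qed.
Lemma mp_horner p x : polyK K p -> K x -> f p.[x] = (mp p).[f x].
Proof.
move=> hp kx; rewrite horner_coef hom_sum; last first.
  by move=> i _; apply: srM => //; apply: srX.
rewrite (@horner_coef_wide _ (size p)); last by apply: size_poly => i hi; rewrite coef_mp nth_default ?hom0.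
by apply: eq_bigr => i _; rewrite homM ?homX ?coef_mp //; apply: srX.
Qed.

End Hom.


Section Dom.
Variable D : idomainType.

Lemma size_sub_lt (p q : {poly D}) : size p = size q -> lead_coef p = lead_coef q ->
  (0 < size p)%N -> (size (p - q)%R < size p)%N.
Proof.
move=> eqs eql pos.
have le : (size (p - q)%R <= size p)%N.
  by apply: leq_trans (size_polyD _ _) _; rewrite size_polyN -eqs maxnn.
rewrite ltn_neqAle le andbT; apply/eqP => eq.
have : lead_coef (p - q) = 0 by rewrite lead_coefE eq coefB {2}eqs -!lead_coefE eql subrr.
move/eqP; rewrite lead_coef_eq0 => /eqP h.
by move: pos; rewrite -eq h size_poly0.
Qed.

Variable K : D -> Prop.
Hypothesis sK : subr K.

Lemma pdivK (g : {poly D}) : polyK K g -> g != 0 -> forall f, polyK K f ->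
  exists k q r, [/\ polyK K q, polyK K r, (size r < size g)%N &
     lead_coef g ^+ k *: f = q * g + r].
Proof.
move=> kg nzg f; move: {2}(size f) (leqnn (size f)) => n; elim: n f => [|n IH] f szf kf.
  exists 0%N, 0, f; split => //; first exact: (polyK0 sK).
    by apply: leq_ltn_trans szf _; rewrite size_poly_gt0.
  by rewrite expr0 scale1r mul0r add0r.
case: (ltnP (size f) (size g)) => hlt.
  exists 0%N, 0, f; split => //; first exact: (polyK0 sK).
  by rewrite expr0 scale1r mul0r add0r.
set lg := lead_coef g; set lf := lead_coef f; set d := (size f - size g)%N.
have nzf : f != 0 by rewrite -size_poly_gt0; apply: leq_trans hlt; rewrite size_poly_gt0.
have lgnz : lg != 0 by rewrite lead_coef_eq0.
have lfnz : lf != 0 by rewrite lead_coef_eq0.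
set f' := lg *: f - (lf *: 'X^d) * g.
have kf' : polyK K f'.
  apply: (polyKB sK); first by apply: (polyKZ sK) => //; apply: polyK_lead.
  by apply: (polyKM sK) => //; apply: (polyKZ sK); [apply: polyK_lead | apply: (polyKXn sK)].
have s1 : size (lg *: f) = size f by rewrite size_scale.
have s2 : size ((lf *: 'X^d) * g) = size f.
  rewrite -scalerAl size_scale // mulrC size_mulXn //.
  by rewrite /d subnK.
have szf' : (size f' < size f)%N.
  rewrite /f' -[X in (_ < X)%N]s1; apply: size_sub_lt; rewrite ?s1 ?s2 //; last by rewrite size_poly_gt0.
  by rewrite lead_coefZ -scalerAl lead_coefZ lead_coefM lead_coefXn mul1r /lf mulrC.
have [k [q [r [kq kr sr e]]]] := IH f' (leq_trans (leq_trans szf' szf) (leqnn _)) kf'.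
have {}szf : (size f' <= n)%N by rewrite -ltnS (leq_trans szf' szf).
exists k.+1, (q + (lg ^+ k * lf) *: 'X^d), r; split => //.
- apply: (polyKD sK) => //; apply: (polyKZ sK); last exact: (polyKXn sK).
  by apply: (srM sK); [apply: (srX sK); apply: polyK_lead | apply: polyK_lead].
rewrite mulrDl -addrA (addrC _ r) addrA -e /f' scalerBr exprSr -scalerA.
by rewrite -!scalerAl !scalerA subrK.
Qed.
End Dom.

Section Adj.
Variable D : idomainType.
Variable K : D -> Prop.
Hypothesis sK : subr K.

Definition adj (s : D) : D -> Prop := fun x => exists f, polyK K f /\ x = f.[s].

Lemma sr_adj s : subr (adj s).
Proof.
split.
- by exists 1; split; [apply: (polyK1 sK) | rewrite hornerC].
- move=> x y [f [kf ->]] [g [kg ->]]; exists (f - g); split; first exact: (polyKB sK).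
  by rewrite hornerD hornerN.
- move=> x y [f [kf ->]] [g [kg ->]]; exists (f * g); split; first exact: (polyKM sK).
  by rewrite hornerM.
Qed.

Lemma adj_K s x : K x -> adj s x.
Proof. by move=> kx; exists x%:P; split; [apply: (polyKC sK) | rewrite hornerC]. Qed.
Lemma adj_s s : adj s s.
Proof. by exists 'X; split; [apply: (polyKX sK) | rewrite hornerX]. Qed.

Variables (T : comNzRingType) (psi : D -> T).
Hypothesis hpsi : homOn K psi.
Variables (s : D) (z : T).
Hypothesis WD : forall h, polyK K h -> h.[s] = 0 -> (map_poly psi h).[z] = 0.

Definition ext (x : D) : T :=
  match excluded_middle_informative (adj s x) with
  | left H => (map_poly psi (proj1_sig (constructive_indefinite_description _ H))).[z]
  | right _ => 0 end.

Lemma ext_rep f : polyK K f -> ext f.[s] = (map_poly psi f).[z].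
Proof.
move=> kf; rewrite /ext; case: excluded_middle_informative => [H|H]; last first.
  by exfalso; apply: H; exists f.
case: constructive_indefinite_description => f0 [kf0 e] /=.
have := WD (polyKB sK kf0 kf); rewrite hornerD hornerN e subrr => /(_ erefl).
by rewrite (mpB sK hpsi) // hornerD hornerN => /eqP; rewrite subr_eq0 => /eqP.
Qed.

Lemma ext_hom : homOn (adj s) ext.
Proof.
split.
- by rewrite -(hornerC 1 s) ext_rep ?(mpC sK hpsi) ?hornerC ?(hom1 hpsi) //; apply: (polyK1 sK).
- move=> x y [f [kf ->]] [g [kg ->]].
  by rewrite -hornerD !ext_rep ?(mpD sK hpsi) ?hornerD //; apply: (polyKD sK).
- move=> x y [f [kf ->]] [g [kg ->]].
  by rewrite -hornerM !ext_rep ?(mpM sK hpsi) ?hornerM //; apply: (polyKM sK).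
Qed.
End Adj.

Section Alg.
Variable D : idomainType.
Variable K : D -> Prop.
Hypothesis sK : subr K.
Variables (g : {poly D}) (s : D).
Hypotheses (kg : polyK K g) (nzg : g != 0) (gs0 : g.[s] = 0)
  (gmin : forall h, polyK K h -> h != 0 -> h.[s] = 0 -> (size g <= size h)%N).

Lemma bezK r : polyK K r -> r.[s] != 0 -> (size r < size g)%N ->
  exists u v c, [/\ polyK K u, polyK K v, K c, c != 0 & u * g + v * r = c%:P].
Proof.
move=> kr rs sr.
have nzr : r != 0 by apply: contraNneq rs => ->; rewrite horner0.
pose J n := pb (exists u v, [/\ polyK K u, polyK K v, u * g + v * r != 0 &
                              size (u * g + v * r) = n]).
have Jr : J (size r).
  apply/pbP; exists 0, 1; split; [exact: (polyK0 sK) | exact: (polyK1 sK) | |];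
  by rewrite mul0r add0r mul1r.
have exJ : exists n, J n by exists (size r).
case: (ex_minnP exJ) => m /pbP [u [v [ku kv nzw szw]]] minm.
set w := u * g + v * r in nzw szw.
have kw : polyK K w by apply: (polyKD sK); apply: (polyKM sK).
have wle : (m <= size r)%N by apply: minm.
case: (eqVneq (size w) 1%N) => [/eqP/size_poly1P [c nzc ec] | sw1].
  exists u, v, c; split => //.
  by have := kw 0%N; rewrite ec coefC.
have sw2 : (1 < size w)%N by rewrite ltn_neqAle eq_sym sw1 size_poly_gt0.
have [k [q [rho [kq krho srho e]]]] := pdivK sK kw nzw kg.
set c := lead_coef w ^+ k in e.
have kc : K c by apply: (srX sK); apply: polyK_lead.
have cnz : c != 0 by rewrite expf_neq0 // lead_coef_eq0.
have rho0 : rho = 0.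
  apply/eqP; apply/negPn/negP => nzrho.
  have : (m <= size rho)%N.
    apply: minm; apply/pbP; exists (c%:P - q * u), (- (q * v)).
    have -> : (c%:P - q * u) * g + - (q * v) * r = rho.
      have -> : rho = c *: g - q * w by rewrite e addrC addKr.
      by rewrite /w mulrBl mul_polyC mulNr mulrDr !mulrA opprD addrA.
    split => //.
    - by apply: (polyKB sK); [apply: (polyKC sK) | apply: (polyKM sK)].
    - by apply: (polyKN sK); apply: (polyKM sK).
  by rewrite leqNgt -szw srho.
rewrite rho0 addr0 in e.
have ws : w.[s] = v.[s] * r.[s] by rewrite /w hornerD !hornerM gs0 mulr0 add0r.
case: (eqVneq w.[s] 0) => [ws0 | wsnz].
  have := gmin kw nzw ws0; rewrite szw => h.
  by move: (leq_trans h wle); rewrite leqNgt sr.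
have qs0 : q.[s] = 0.
  have := congr1 (fun p => p.[s]) e; rewrite /= hornerZ hornerM gs0 mulr0.
  by move/esym/eqP; rewrite mulf_eq0 (negPf wsnz) orbF => /eqP.
have nzq : q != 0.
  apply/eqP => q0; move: e; rewrite q0 mul0r => /eqP.
  by rewrite scale_poly_eq0 (negPf cnz) (negPf nzg).
have := gmin kq nzq qs0.
have : size (c *: g) = size g by rewrite size_scale.
rewrite e size_mul // => <-.
rewrite -(prednK (ltnW sw2)) addnS /= => h.
by move: h; rewrite -{2}[size q]addn0 leq_add2l leqn0 => /eqP h0; have := sw2; rewrite -(prednK (ltnW sw2)) h0.
Qed.
End Alg.

Lemma exists_nonroot (p : {poly algC}) : p != 0 -> exists z, ~~ root p z.
Proof.
move=> nzp; case: (pbP (exists z, ~~ root p z)) => // H.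
pose rs := [seq (i%:R : algC) | i <- iota 0 (size p)].
have hall : all (root p) rs.
  by apply/allP => x /mapP [i _ ->]; apply/negPn/negP => h; apply: H; exists i%:R.
have hu : uniq rs.
  by rewrite map_inj_uniq ?iota_uniq // => i j /eqP; rewrite eqr_nat => /eqP.
by have := max_poly_roots nzp hall hu; rewrite size_map size_iota ltnn.
Qed.

Section Step.
Variable D : idomainType.

Definition P1 (K : D -> Prop) :=
  forall a, K a -> a != 0 -> exists psi : D -> algC, homOn K psi /\ psi a != 0.

Lemma step K s : subr K -> P1 K -> P1 (adj K s).
Proof.
move=> sK IH a [f [kf ->]] nza.
case: (pbP (exists g, [/\ polyK K g, g != 0 & g.[s] = 0])) => [alg | tr].
- pose Q n := pb (exists g, [/\ polyK K g, g != 0, g.[s] = 0 & size g = n]).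
  have exQ : exists n, Q n.
    by case: alg => g [kg nzg gs]; exists (size g); apply/pbP; exists g.
  case: (ex_minnP exQ) => m /pbP [g [kg nzg gs0 szg]] minm.
  have gmin : forall h, polyK K h -> h != 0 -> h.[s] = 0 -> (size g <= size h)%N.
    by move=> h kh nzh hs; rewrite szg; apply: minm; apply/pbP; exists h.
  set lg := lead_coef g.
  have klg : K lg by apply: polyK_lead.
  have lgnz : lg != 0 by rewrite lead_coef_eq0.
  have [k [q [r [kq kr sr e]]]] := pdivK sK kg nzg kf.
  have rs : r.[s] = lg ^+ k * f.[s].
    by have := congr1 (fun p => p.[s]) e; rewrite /= hornerZ hornerD hornerM gs0 mulr0 add0r.
  have rsnz : r.[s] != 0 by rewrite rs mulf_neq0 // expf_neq0.
  have [u [v [c [ku kv kc cnz euv]]]] := bezK sK kg nzg gs0 gmin kr rsnz sr.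
  have [psi [hpsi psinz]] := IH (lg * c) (srM sK klg kc) (mulf_neq0 lgnz cnz).
  rewrite (homM hpsi) // mulf_eq0 negb_or in psinz; case/andP: psinz => plg pc.
  have sg2 : (1 < size g)%N.
    rewrite ltnNge; apply/negP => h; move: gs0; rewrite (size1_polyC h) hornerC => h0.
    by move: nzg; rewrite (size1_polyC h) h0 eqxx.
  have szmg : size (map_poly psi g) = size g by rewrite size_map_poly_id0.
  have [z zr] : exists z, root (map_poly psi g) z.
    by apply/closed_rootP; rewrite szmg; apply: contraTneq sg2 => ->.
  have mgz : (map_poly psi g).[z] = 0 by apply/eqP.
  have WD : forall h, polyK K h -> h.[s] = 0 -> (map_poly psi h).[z] = 0.
    move=> h kh hs.
    have [k' [q' [r' [kq' kr' sr' e']]]] := pdivK sK kg nzg kh.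
    have r'0 : r' = 0.
      apply/eqP; apply/negPn/negP => nzr'.
      have r's : r'.[s] = 0.
        have := congr1 (fun p => p.[s]) e'; rewrite /= hornerZ hornerD hornerM gs0 mulr0 add0r hs mulr0.
        by move->.
      by move: (gmin r' kr' nzr' r's); rewrite leqNgt sr'.
    rewrite r'0 addr0 in e'.
    have := congr1 (fun p => (map_poly psi p).[z]) e'; rewrite /=.
    rewrite (mpZ sK hpsi) //; last by apply: (srX sK).
    rewrite (mpM sK hpsi) // hornerZ hornerM mgz mulr0 (homX sK hpsi) //.
    by move/eqP; rewrite mulf_eq0 expf_eq0 (negPf plg) andbF /= => /eqP.
  exists (ext K psi s z); split; first exact: (ext_hom sK hpsi WD).
  rewrite (ext_rep sK hpsi WD) //.
  have e2 := congr1 (fun p => (map_poly psi p).[z]) e; rewrite /= in e2.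
  have klk : K (lead_coef g ^+ k) := srX sK k klg.
  have kqg := polyKM sK kq kg.
  rewrite (mpZ sK hpsi) // (mpD sK hpsi) // (mpM sK hpsi) // in e2.
  rewrite hornerZ hornerD hornerM mgz mulr0 add0r (homX sK hpsi) // in e2.
  have e3 := congr1 (fun p => (map_poly psi p).[z]) euv; rewrite /= in e3.
  have kug := polyKM sK ku kg; have kvr := polyKM sK kv kr.
  rewrite (mpD sK hpsi) // (mpM sK hpsi) // (mpM sK hpsi) // (mpC sK hpsi) in e3.
  rewrite hornerD !hornerM hornerC mgz mulr0 add0r in e3.
  apply/negP => /eqP h0; move: e2; rewrite h0 mulr0 => /esym rz.
  by move: e3; rewrite rz mulr0 => /esym/eqP; rewrite (negPf pc).
- have nzf : f != 0 by apply: contraNneq nza => ->; rewrite horner0.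
  have klf : K (lead_coef f) by apply: polyK_lead.
  have lfnz : lead_coef f != 0 by rewrite lead_coef_eq0.
  have [psi [hpsi plf]] := IH _ klf lfnz.
  have szmf : size (map_poly psi f) = size f by rewrite size_map_poly_id0.
  have nzmf : map_poly psi f != 0 by rewrite -size_poly_gt0 szmf size_poly_gt0.
  have [z zr] := exists_nonroot nzmf.
  have WD : forall h, polyK K h -> h.[s] = 0 -> (map_poly psi h).[z] = 0.
    move=> h kh hs; case: (eqVneq h 0) => [-> | nzh]; first by rewrite map_poly0 horner0.
    by exfalso; apply: tr; exists h.
  exists (ext K psi s z); split; first exact: (ext_hom sK hpsi WD).
  by rewrite (ext_rep sK hpsi WD).
Qed.
End Step.

Lemma homOn_sub (R S : comNzRingType) (K1 K2 : R -> Prop) (f : R -> S) :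
  (forall x, K1 x -> K2 x) -> homOn K2 f -> homOn K1 f.
Proof.
move=> h [h1 hD hM]; split => // x y kx ky; [apply: hD | apply: hM]; exact: h.
Qed.

Lemma in_ZS_min (R : comNzRingType) (S : seq R) (K : R -> Prop) :
  subr K -> (forall t, t \in S -> K t) -> forall x, in_ZS S x -> K x.
Proof.
move=> sK hS x hx; apply/pbP; apply: (hx [pred y | pb (K y)]).
- split.
  + by rewrite inE; apply/pbP; apply: (sr1 sK).
  + by move=> u v; rewrite !inE => /pbP ku /pbP kv; apply/pbP; apply: (srB sK).
  + by move=> u v; rewrite !inE => /pbP ku /pbP kv; apply/pbP; apply: (srM sK).
- by move=> t ht; rewrite inE; apply/pbP; apply: hS.
Qed.

Lemma sr_in_ZS (R : comNzRingType) (S : seq R) : subr (in_ZS S).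
Proof.
split.
- by move=> P [h1 _ _] _.
- move=> x y hx hy P hP hS; case: (hP) => _ hB _; apply: hB; [exact: hx | exact: hy].
- move=> x y hx hy P hP hS; case: (hP) => _ _ hM; apply: hM; [exact: hx | exact: hy].
Qed.

Lemma in_ZS_mem (R : comNzRingType) (S : seq R) t : t \in S -> in_ZS S t.
Proof. by move=> ht P _ hS; apply: hS. Qed.

Section Base.
Variable D : idomainType.
Hypothesis hchar : [pchar D] =i pred0.

Definition ZK : D -> Prop := fun x => exists m : int, x = m%:~R.

Lemma sr_ZK : subr ZK.
Proof.
split.
- by exists 1; rewrite rmorph1.
- by move=> x y [m ->] [n ->]; exists (m - n); rewrite rmorphB.
- by move=> x y [m ->] [n ->]; exists (m * n); rewrite rmorphM.
Qed.

Lemma intrD0 (m : int) : m%:~R = 0 :> D -> m = 0.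
Proof.
move/pcharf0P: hchar => hc.
case: m => n; rewrite ?NegzE ?mulrNz => /eqP.
  by rewrite -pmulrn hc => /eqP ->.
by rewrite oppr_eq0 hc.
Qed.

Definition psi0 (x : D) : algC :=
  match excluded_middle_informative (ZK x) with
  | left H => (proj1_sig (constructive_indefinite_description _ H))%:~R
  | right _ => 0 end.

Lemma psi0_rep (m : int) : psi0 m%:~R = m%:~R.
Proof.
rewrite /psi0; case: excluded_middle_informative => [H|H]; last by exfalso; apply: H; exists m.
case: constructive_indefinite_description => m0 /= e.
suff -> : m0 = m by [].
apply/eqP; rewrite -subr_eq0; apply/eqP; apply: intrD0.
by rewrite rmorphB /= -e subrr.
Qed.

Lemma P1_ZK : P1 ZK.
Proof.
move=> a [m ->] nza; exists psi0; split.
- split.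
  + by rewrite -(rmorph1 (intr : int -> D)) psi0_rep rmorph1.
  + by move=> x y [m1 ->] [m2 ->]; rewrite -rmorphD !psi0_rep rmorphD.
  + by move=> x y [m1 ->] [m2 ->]; rewrite -rmorphM !psi0_rep rmorphM.
- rewrite psi0_rep intr_eq0; apply: contraNneq nza => ->; by rewrite rmorph0.
Qed.

Fixpoint ZSr (S : seq D) : D -> Prop :=
  if S is s :: S' then adj (ZSr S') s else ZK.

Lemma sr_ZSr S : subr (ZSr S).
Proof. elim: S => [|s S IH] /=; [exact: sr_ZK | exact: sr_adj]. Qed.

Lemma ZSr_mem S t : t \in S -> ZSr S t.
Proof.
elim: S => [|s S IH] //=; rewrite inE => /orP [/eqP -> | ht].
  exact: adj_s (sr_ZSr S) s.
exact: adj_K (sr_ZSr S) s _ (IH ht).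
Qed.

Lemma P1_ZSr S : P1 (ZSr S).
Proof. elim: S => [|s S IH] /=; [exact: P1_ZK | exact: step (sr_ZSr S) IH]. Qed.

Lemma part1 (S : seq D) (a : D) : in_ZS S a -> a != 0 ->
  exists psi : D -> algC, homOn (in_ZS S) psi /\ psi a != 0.
Proof.
move=> ha nza.
have sub : forall x, in_ZS S x -> ZSr S x.
  by apply: in_ZS_min; [exact: sr_ZSr | exact: ZSr_mem].
have [psi [hpsi pa]] := P1_ZSr (sub _ ha) nza.
by exists psi; split => //; apply: homOn_sub hpsi.
Qed.
End Base.


Lemma absz_add1 (t : int) : (3 <= absz t)%N -> (1 < absz (t + 1)%R)%N.
Proof.
case: t => n /=.
  by move=> h; rewrite addn1 ltnS; exact: leq_ltn_trans (leq0n 2) h.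
rewrite NegzE => h.
have -> : - (Posz n.+1) + 1 = - (Posz n) by rewrite -addn1 PoszD opprD addrNK.
by rewrite abszN /=; move: h; rewrite !ltnS.
Qed.

Lemma schur (H : {poly int}) : (1 < size H)%N -> forall N : nat,
  exists p (k : int), [/\ prime p, (N < p)%N & (p%:Z %| H.[k])%Z].
Proof.
move=> sH N.
set h0 := H.[0].
case: (eqVneq h0 0) => [h00 | h0nz].
  have [p ltNp pp] := prime_above N.
  by exists p, 0; split => //; rewrite -/h0 h00 dvdz0.
have : root (H - h0%:P) 0 by rewrite /root hornerD hornerN hornerC subrr.
case/factor_theorem => G eG.
have eH : H = G * 'X + h0%:P by rewrite GRing.subr0 in eG; rewrite -eG subrK.
have nzG : G != 0.
  apply/eqP => G0; move: sH; rewrite eH G0 mul0r add0r.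
  by rewrite ltnNge size_polyC_leq1.
have hev k : H.[k] = G.[k] * k + h0 by rewrite {1}eH hornerD hornerMX hornerC.
set c : int := h0 * (N`!)%:Z.
have cnz : c != 0 by rewrite mulf_neq0 // eqz_nat -lt0n fact_gt0.
have [m [m3 Gm]] : exists m : nat, (3 <= m)%N /\ G.[c * m%:Z] != 0.
  case: (pbP (exists m : nat, (3 <= m)%N /\ G.[c * m%:Z] != 0)) => // Hn.
  pose rs := [seq c * (i + 3)%:Z | i <- iota 0 (size G)].
  have hall : all (root G) rs.
    apply/allP => x /mapP [i _ ->]; apply/negPn/negP => h; apply: Hn.
    by exists (i + 3)%N; split; [rewrite leq_addl | ].
  have hu : uniq rs.
    rewrite map_inj_uniq ?iota_uniq // => i j /mulfI -/(_ cnz) /eqP.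
    by rewrite eqz_nat eqn_add2r => /eqP.
  by have := max_poly_roots nzG hall hu; rewrite size_map size_iota ltnn.
set k := c * m%:Z.
set t := (N`!)%:Z * m%:Z * G.[k].
have ht : (3 <= absz t)%N.
  rewrite /t !abszM /= -mulnA -[3%N]mul1n leq_mul ?fact_gt0 //.
  rewrite -[3%N]muln1 leq_mul // lt0n absz_eq0 //.
set w := t + 1.
have hw : (1 < absz w)%N by apply: absz_add1.
have eHk : H.[k] = h0 * w.
  rewrite hev /w /t /k /c mulrDr mulr1; congr (_ + _).
  by rewrite mulrC !mulrA.
set p := pdiv (absz w).
have pp : prime p by apply: pdiv_prime.
have pw : (p%:Z %| w)%Z by rewrite dvdzE /= pdiv_dvd.
exists p, k; split => //; last by rewrite eHk dvdz_mull.
rewrite ltnNge; apply/negP => pN.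
have pt : (p%:Z %| t)%Z.
  rewrite /t -mulrA; apply: dvdz_mulr; rewrite dvdzE /=.
  by apply: dvdn_fact; rewrite prime_gt0.
have : (p%:Z %| w - t)%Z by apply: rpredB.
rewrite /w addrC addKr dvdz1 /= => /eqP p1.
by move: (prime_gt1 pp); rewrite p1.
Qed.

Local Notation pZtoC := (map_poly (intr : int -> algC)).
Local Notation pQtoC := (map_poly (ratr : rat -> algC)).
Local Notation pZtoQ := (map_poly (intr : int -> rat)).

Lemma pQZ (F : {poly int}) : pQtoC (pZtoQ F) = pZtoC F.
Proof. by rewrite -map_poly_comp; apply: eq_map_poly => x /=; rewrite rmorph_int. Qed.

Lemma minpoly_int (th : algC) : exists H : {poly int},
  [/\ (1 < size H)%N, (pZtoC H).[th] = 0,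
      (forall F : {poly int}, (pZtoC F).[th] = 0 -> exists r, F = H * r) &
      (forall B : {poly int}, (pZtoC B).[th] != 0 ->
         exists U V (M : int), M != 0 /\ U * H + V * B = M%:P)].
Proof.
have [P [eP monP] dvP] := minCpolyP th.
have [Q [a anz eQ]] := rat_poly_scale P.
have nzP : P != 0 by apply: monic_neq0.
have Prt : root (pQtoC P) th by rewrite -eP root_minCpoly.
have szP : (1 < size P)%N.
  by have := size_minCpoly th; rewrite eP size_map_poly.
have nzQ : Q != 0 by apply: contraNneq nzP => Q0; rewrite eQ Q0 map_poly0 scaler0.
set H := zprimitive Q.
have eQH : Q = zcontents Q *: H by apply: zpolyEprim.
have zcnz : zcontents Q != 0 by rewrite zcontents_eq0.
set lam : rat := a%:~R^-1 * (zcontents Q)%:~R.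
have lamnz : lam != 0 by rewrite mulf_neq0 ?invr_eq0 ?intr_eq0.
have ePH : P = lam *: pZtoQ H.
  by rewrite eQ {1}eQH linearZ /= scalerA /lam.
exists H; split.
- suff -> : size H = size P by [].
  by rewrite ePH size_scale // size_rat_int_poly.
- have : root (pQtoC P) th := Prt.
  rewrite ePH map_polyZ /= pQZ /root hornerZ mulf_eq0 fmorph_eq0 (negPf lamnz) /=.
  by move/eqP.
- move=> F hF.
  have : P %| pZtoQ F by rewrite -dvP pQZ /root hF.
  rewrite ePH dvdpZl // dvdp_rat_int => /dvdpP_int [r er].
  by exists r; rewrite er /H zprimitive_id.
- move=> B hB.
  have irrP : irreducible_poly P.
    apply: (subfx_irreducibleP Prt nzP).1 => q qr nzq.
    by apply: dvdp_leq nzq _; rewrite -dvP.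
  set Bq := pZtoQ B.
  have nBq : ~~ (P %| Bq) by rewrite -dvP pQZ.
  have cop : coprimep P Bq.
    rewrite /coprimep; apply/negPn/negP => hg.
    have eqg := irrP.2 _ hg (dvdp_gcdl P Bq).
    by apply: (negP nBq); rewrite -(eqp_dvdl Bq eqg) dvdp_gcdr.
  have [[u1 u2] /= hu] := Bezout_coprimepP _ _ cop.
  have [c cnz ec] : exists2 c, c != 0 & u1 * P + u2 * Bq = c%:P.
    by apply/size_poly1P; rewrite size_poly_eq1.
  have e1 : ((c^-1 * lam) *: u1) * pZtoQ H + (c^-1 *: u2) * Bq = 1.
    have := congr1 (fun x => c^-1 *: x) ec; rewrite /= scalerDr ePH.
    rewrite -!scalerAl -scalerAr !scalerA => ->.
    by rewrite -mul_polyC -polyCM mulVf.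
  have [U0 [al alnz eU]] := rat_poly_scale ((c^-1 * lam) *: u1).
  have [V0 [be benz eV]] := rat_poly_scale (c^-1 *: u2).
  rewrite eU eV in e1.
  exists (be *: U0), (al *: V0), (al * be); split; first by rewrite mulf_neq0.
  apply: (@map_inj_poly _ _ (intr : int -> rat)); [exact: intr_inj | exact: rmorph0 |].
  rewrite rmorphD !rmorphM /= !map_polyZ map_polyC /=.
  have := congr1 (fun x => (al * be)%:~R *: x) e1; rewrite /= scalerDr.
  rewrite -!scalerAl !scalerA => e2.
  have h1 : (al * be)%:~R / al%:~R = be%:~R :> rat.
    by rewrite rmorphM /= mulrC mulKf ?intr_eq0.
  have h2 : (al * be)%:~R / be%:~R = al%:~R :> rat.
    by rewrite rmorphM /= mulfK ?intr_eq0.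
  rewrite h1 h2 in e2; rewrite e2 map_polyC /= -polyCM -rmorphM /=.
  by rewrite alg_polyC.
Qed.

Lemma mixD (R : comNzRingType) (x y a b : R) :
  (x + y) * (a * b) = b * (x * a) + a * (y * b).
Proof. by rewrite mulrDl [b * _]mulrC -mulrA [a * (y * b)]mulrCA. Qed.
Lemma mixB (R : comNzRingType) (x y a b : R) :
  (x - y) * (a * b) = b * (x * a) - a * (y * b).
Proof. by rewrite mixD mulNr mulrN. Qed.

Lemma canc (R : comUnitRingType) (u a v : R) : u \is a GRing.unit ->
  u * a * (u^-1 * v) = a * v.
Proof. by move=> uu; rewrite mulrACA divrr // mul1r. Qed.

Section Red.
Variables (p : nat) (th : algC) (E : int) (H : {poly int}) (k : int).
Hypotheses (pp : prime p) (Ep : ~~ (p %| absz E)%N) (Hk : (p%:Z %| H.[k])%Z)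
  (Hdiv : forall F : {poly int}, (pZtoC F).[th] = 0 -> exists r, F = H * r).

Lemma Zp_dvd0 (z : int) : (p%:Z %| z)%Z -> (z%:~R : 'Z_p) = 0.
Proof.
case/dvdzP => q ->; rewrite rmorphM /= -[(p%:Z)%:~R]/(p%:R : 'Z_p).
by rewrite pchar_Zp ?mulr0 // prime_gt1.
Qed.

Lemma Zp_unit (z : int) : ~~ (p %| absz z)%N -> (z%:~R : 'Z_p) \is a GRing.unit.
Proof.
case: z => n /= h.
  by rewrite -pmulrn unitZpE ?prime_gt1 // prime_coprime.
by rewrite NegzE mulrNz unitrN -pmulrn unitZpE ?prime_gt1 // prime_coprime.
Qed.

Lemma Zp_neq0 (z : int) : ~~ (p %| absz z)%N -> (z%:~R : 'Z_p) != 0.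
Proof.
move=> h; apply/negP => /eqP z0; move: (Zp_unit h); rewrite z0.
by rewrite unitr0.
Qed.

Definition ev (F : {poly int}) : 'Z_p := (F.[k])%:~R.
Lemma evD F G : ev (F + G) = ev F + ev G. Proof. by rewrite /ev hornerD rmorphD. Qed.
Lemma evM F G : ev (F * G) = ev F * ev G. Proof. by rewrite /ev hornerM rmorphM. Qed.
Lemma evC c : ev c%:P = c%:~R. Proof. by rewrite /ev hornerC. Qed.
Lemma evB F G : ev (F - G) = ev F - ev G. Proof. by rewrite /ev hornerD hornerN rmorphB. Qed.
Lemma ev_root F : (pZtoC F).[th] = 0 -> ev F = 0.
Proof. by case/Hdiv => r ->; rewrite evM /ev (Zp_dvd0 Hk) mul0r. Qed.

Let e : 'Z_p := E%:~R.
Lemma eu : e \is a GRing.unit. Proof. exact: Zp_unit. Qed.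
Lemma eXu j : e ^+ j \is a GRing.unit. Proof. by rewrite unitrX // eu. Qed.

Definition Rr (x : algC) :=
  exists jF : nat * {poly int}, x * (E%:~R) ^+ jF.1 = (pZtoC jF.2).[th].

Definition chi (x : algC) : 'Z_p :=
  match excluded_middle_informative (Rr x) with
  | left h => let jF := proj1_sig (constructive_indefinite_description _ h) in
              ev jF.2 / e ^+ jF.1
  | right _ => 0 end.

Lemma pZtoC_hC (c : int) F : (pZtoC (c%:P * F)).[th] = c%:~R * (pZtoC F).[th].
Proof. by rewrite rmorphM /= map_polyC hornerM hornerC. Qed.

Lemma chi_rep x j F : x * (E%:~R) ^+ j = (pZtoC F).[th] -> chi x = ev F / e ^+ j.
Proof.
move=> hx; rewrite /chi; case: excluded_middle_informative => [h|h]; last first.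
  by exfalso; apply: h; exists (j, F).
case: constructive_indefinite_description => [[j0 F0]] /= h0.
set G := (E ^+ j)%:P * F0 - (E ^+ j0)%:P * F.
have : (pZtoC G).[th] = 0.
  rewrite /G rmorphB /= hornerD hornerN -!/(pZtoC _) !pZtoC_hC -h0 -hx !rmorphXn /=.
  by rewrite mulrCA [X in _ - X]mulrCA [X in x * X]mulrC subrr.
move/ev_root; rewrite /G evB !evM !evC !rmorphXn /= -/e => /eqP; rewrite subr_eq0 => /eqP eG.
apply: (mulIr (eXu j0)); apply: (mulIr (eXu j)).
rewrite divrK ?eXu // mulrAC divrK ?eXu //.
by rewrite mulrC eG mulrC.
Qed.

Lemma Rr_poly F : Rr (pZtoC F).[th].
Proof. by exists (0%N, F); rewrite expr0 mulr1. Qed.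

Lemma sr_Rr : subr Rr.
Proof.
split.
- by exists (0%N, 1); rewrite expr0 mulr1 rmorph1 hornerC.
- move=> x y [[j1 F1] /= h1] [[j2 F2] /= h2].
  exists ((j1 + j2)%N, (E ^+ j2)%:P * F1 - (E ^+ j1)%:P * F2) => /=.
  rewrite rmorphB /= hornerD hornerN -!/(pZtoC _) !pZtoC_hC -h1 -h2 !rmorphXn /=.
  by rewrite exprD mixB.
- move=> x y [[j1 F1] /= h1] [[j2 F2] /= h2].
  exists ((j1 + j2)%N, F1 * F2) => /=.
  by rewrite rmorphM /= hornerM -h1 -h2 exprD mulrACA.
Qed.

Lemma chi_hom : homOn Rr chi.
Proof.
split.
- rewrite (@chi_rep 1 0 1); first by rewrite evC expr0 divr1.
  by rewrite expr0 mulr1 rmorph1 hornerC.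
- move=> x y [[j1 F1] /= h1] [[j2 F2] /= h2].
  rewrite (chi_rep h1) (chi_rep h2).
  rewrite (@chi_rep _ (j1 + j2) ((E ^+ j2)%:P * F1 + (E ^+ j1)%:P * F2)); last first.
    rewrite rmorphD /= hornerD -!/(pZtoC _) !pZtoC_hC -h1 -h2 !rmorphXn /=.
    by rewrite exprD mixD.
  rewrite evD !evM !evC !rmorphXn /= -/e exprD.
  rewrite invrM ?eXu // mulrDl.
  rewrite canc ?eXu // [X in _ + _ * X]mulrC canc ?eXu //.
- move=> x y [[j1 F1] /= h1] [[j2 F2] /= h2].
  rewrite (chi_rep h1) (chi_rep h2) (@chi_rep _ (j1 + j2) (F1 * F2)); last first.
    by rewrite rmorphM /= hornerM -h1 -h2 exprD mulrACA.
  by rewrite evM exprD invrM ?eXu // [RHS]mulrACA [in RHS](mulrC (e ^+ j1)^-1).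
Qed.
End Red.

Lemma part2 (T : seq algC) (b : algC) (N : nat) : in_ZS T b -> b != 0 ->
  exists p, [/\ prime p, (N < p)%N &
    exists chi : algC -> 'Z_p, homOn (in_ZS T) chi /\ chi b != 0].
Proof.
move=> hb nzb.
case: (algC_PET T) => th _ [ps eT].
have [H [sH Hth Hdiv Hbez]] := minpoly_int th.
pose az (i : 'I_(size ps)) : int := proj1_sig (projT2 (rat_poly_scale ps`_i)).
pose qz (i : 'I_(size ps)) : {poly int} := projT1 (rat_poly_scale ps`_i).
have azP i : az i != 0 /\ ps`_i = (az i)%:~R^-1 *: pZtoQ (qz i).
  rewrite /az /qz; case: (rat_poly_scale ps`_i) => q [a anz ea] /=; by split.
set E := \prod_(i < size ps) az i.
have Enz : E != 0 by apply/prodf_neq0 => i _; case: (azP i).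
have inT : forall t, t \in T -> Rr th E t.
  move=> t; rewrite eT => /mapP [q qin ->].
  have ilt : (index q ps < size ps)%N by rewrite index_mem.
  set i := Ordinal ilt.
  have eq : q = ps`_i by rewrite /= nth_index.
  case: (azP i) => anz eps.
  rewrite eq eps map_polyZ /= pQZ hornerZ fmorphV rmorph_int /=.
  apply: (srM (sr_Rr th E)); last exact: Rr_poly.
  exists (1%N, (\prod_(j < size ps | j != i) az j)%:P) => /=.
  rewrite expr1 map_polyC hornerC /= /E (bigD1 i) //= rmorphM /= mulKf //.
  by rewrite intr_eq0.
have inR : forall x, in_ZS T x -> Rr th E x.
  by apply: in_ZS_min; [exact: sr_Rr | exact: inT].
have [[jb B] /= hbB] := inR _ hb.
have Bnz : (pZtoC B).[th] != 0.
  by rewrite -hbB mulf_neq0 // expf_neq0 // intr_eq0.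
have [U [V [M [Mnz eUV]]]] := Hbez B Bnz.
have [p [k [pp ltp pk]]] := schur sH (N + absz E + absz M).
have pgt : forall z : int, z != 0 -> (absz z <= N + absz E + absz M)%N -> ~~ (p %| absz z)%N.
  move=> z znz hz; apply/negP => /dvdn_leq; rewrite lt0n absz_eq0 => /(_ znz) h.
  by move: (leq_ltn_trans (leq_trans h hz) ltp); rewrite ltnn.
have Ep : ~~ (p %| absz E)%N by apply: pgt => //; rewrite -addnA addnCA leq_addr.
have Mp : ~~ (p %| absz M)%N by apply: pgt => //; rewrite leq_addl.
exists p; split => //.
  by apply: leq_ltn_trans ltp; rewrite -addnA leq_addr.
exists (chi p th E k); split.
  by apply: homOn_sub (chi_hom pp Ep pk Hdiv); exact: inR.
rewrite (chi_rep pp Ep pk Hdiv hbB).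
have evB : ev p k B != 0.
  have evH : ev p k H = 0 by rewrite /ev (Zp_dvd0 pp pk).
  have := congr1 (ev p k) eUV; rewrite evD !evM evC evH mulr0 add0r => h.
  apply/negP => /eqP h0; move: h; rewrite h0 mulr0 => /esym/eqP.
  by rewrite (negPf (Zp_neq0 pp Mp)).
apply/negP => /eqP h0; move: evB.
by rewrite -(divrK (eXu pp Ep jb) (ev p k B)) h0 mul0r eqxx.
Qed.


Lemma sr_det (R : comNzRingType) (K : R -> Prop) n (M : 'M[R]_n) :
  subr K -> (forall i j, K (M i j)) -> K (\det M).
Proof.
move=> sK hM; rewrite /determinant; apply: (sr_sum sK) => s _.
apply: (srM sK); first exact: (sr_sign sK).
by apply: (sr_prod sK) => i _.
Qed.

Lemma hom_comp (R S U : comNzRingType) (K1 : R -> Prop) (K2 : S -> Prop)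
  (f : R -> S) (g : S -> U) :
  homOn K1 f -> homOn K2 g -> (forall x, K1 x -> K2 (f x)) -> subr K1 ->
  homOn K1 (fun x => g (f x)).
Proof.
move=> hf hg hK sK1; split.
- by rewrite (hom1 hf) (hom1 hg).
- by move=> x y kx ky; rewrite (homD hf) // (homD hg) //; apply: hK.
- by move=> x y kx ky; rewrite (homM hf) // (homM hg) //; apply: hK.
Qed.

Unset Implicit Arguments. Set Strict Implicit.

Theorem mainTheorem8 (D : idomainType) (hchar : [pchar D] =i pred0)
    (S : seq D) (n : nat) (hn : (0 < n)%N) :
  forall N : nat, exists p : nat,
    [/\ prime p, (N < p)%N &
      exists phi : D -> 'Z_p,
        [/\ ring_hom_on_ZS S phi,
            {in S &, injective phi} &
            forall M : 'M[D]_n, (forall i j, M i j \in S) ->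
              (\det M == 0) = (\det (map_mx phi M) == 0)]].
Proof.
move=> N.
have sK := sr_in_ZS S.
set K := in_ZS S in sK *.
have KS : forall t, t \in S -> K t by move=> t; apply: in_ZS_mem.
pose mkM (A : 'M['I_(size S)]_n) : 'M[D]_n := map_mx (fun i : 'I_(size S) => S`_i) A.
have KmkM : forall A i j, K (mkM A i j).
  by move=> A i j; rewrite mxE; apply: KS; apply: mem_nth.
set a1 := \prod_(A : 'M['I_(size S)]_n | \det (mkM A) != 0) \det (mkM A).
set a2 := \prod_(i < size S) \prod_(j < size S | S`_i != S`_j) (S`_i - S`_j).
have Ka1 : K a1 by apply: (sr_prod sK) => A _; apply: (sr_det sK).
have Kd : forall i j : 'I_(size S), K (S`_i - S`_j).
  by move=> i j; apply: (srB sK); apply: KS; apply: mem_nth.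
have Ka2 : K a2 by apply: (sr_prod sK) => i _; apply: (sr_prod sK) => j _.
have a1nz : a1 != 0 by apply/prodf_neq0.
have a2nz : a2 != 0.
  by apply/prodf_neq0 => i _; apply/prodf_neq0 => j hj; rewrite subr_eq0.
have [psi [hpsi pa]] := part1 hchar (srM sK Ka1 Ka2) (mulf_neq0 a1nz a2nz).
set T := map psi S.
have hKT : forall x, K x -> in_ZS T (psi x).
  move=> x; have : forall y, K y -> K y /\ in_ZS T (psi y); last by move=> h /h [].
  apply: in_ZS_min.
  - split.
    + by split; [apply: (sr1 sK) | rewrite (hom1 hpsi); apply: (sr1 (sr_in_ZS T))].
    + move=> u v [ku tu] [kv tv]; split; first exact: (srB sK).
      by rewrite (homB sK hpsi) //; apply: (srB (sr_in_ZS T)).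
    + move=> u v [ku tu] [kv tv]; split; first exact: (srM sK).
      by rewrite (homM hpsi) //; apply: (srM (sr_in_ZS T)).
  - by move=> t ht; split; [apply: KS | apply: in_ZS_mem; apply: map_f].
have [p [pp ltp [chi [hchi pb0]]]] := part2 N (hKT _ (srM sK Ka1 Ka2)) pa.
set phi := fun x => chi (psi x).
have hphi : homOn K phi by apply: hom_comp hpsi hchi hKT sK.
have phia : phi (a1 * a2) != 0 by [].
rewrite (homM hphi) // in phia.
exists p; split => //; exists phi; split.
- split.
  + exact: (hom1 hphi).
  + by move=> x y kx ky; apply: (homD hphi).
  + by move=> x kx; apply: (homN sK hphi).
  + by move=> x y kx ky; apply: (homM hphi).
- move=> s t hs ht e; case: (eqVneq s t) => // nst; exfalso.
  have ph2 : phi a2 = 0.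
    rewrite /a2 (hom_prod sK hphi); last by move=> i _; apply: (sr_prod sK).
    set i := Ordinal (etrans (index_mem s S) hs).
    set j := Ordinal (etrans (index_mem t S) ht).
    have ei : S`_i = s by rewrite /= nth_index.
    have ej : S`_j = t by rewrite /= nth_index.
    rewrite (bigD1 i) //= (hom_prod sK hphi); last by move=> k _; apply: (srB sK); apply: KS; rewrite ?nth_index // mem_nth.
    rewrite (bigD1 j) /=; last by rewrite ei ej.
    by rewrite (homB sK hphi) ?ei ?ej ?e ?subrr ?mul0r //; apply: KS.
  by move: phia; rewrite ph2 mulr0 eqxx.
- move=> M hM.
  have KM : forall i j, K (M i j) by move=> i j; apply: KS.
  rewrite -(hom_det sK hphi KM).
  case: (eqVneq (\det M) 0) => [-> | dnz]; first by rewrite (hom0 sK hphi) eqxx.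
  apply/esym/negP => /eqP pd.
  pose A : 'M['I_(size S)]_n :=
    \matrix_(i, j) Ordinal (etrans (index_mem (M i j) S) (hM i j)).
  have eA : mkM A = M by apply/matrixP => i j; rewrite !mxE /= nth_index.
  have ph1 : phi a1 = 0.
    rewrite /a1 (hom_prod sK hphi) //; last by move=> B _; apply: (sr_det sK).
    by rewrite (bigD1 A) /= eA ?dnz // pd mul0r.
  by move: phia; rewrite ph1 mul0r eqxx.
Qed.
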